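(* Let $G$ be a group with finite generating set $T$ (with $T=T^{-1}$, $e\notin T$). Then there exist a group $H$ with a finite generating set $S$ (symmetric, $e\notin S$) and a homomorphism $\phi\colon G\to H$ such that (1) $\phi$ is an isometric embedding with respect to the word metrics of $(G,T)$ and $(H,S)$; (2) $\kappa(\phi(g))<0$ for all $g\in G\smallsetminus\{e\}$. In fact, $\kappa(h)<0$ for all $h\in H\smallsetminus\{e\}$ (curvature with respect to $S$).
   Context: For a group with finite generating set $S$ ($S=S^{-1}$, $e\notin S$), $|x|$ is word length, $\mathrm{Av}(g)=\frac{1}{|S|}\sum_{a\in S}|a^{-1}ga|$, and for $g\neq e$ the curvature is $\kappa(g)=\frac{|g|-\mathrm{Av}(g)}{|g|}$. *)

(* Defs.v *)
From Stdlib Require Import Reals List ClassicalEpsilon.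
Import ListNotations.
Open Scope R_scope.

Record group := Group {
  gcar :> Type;
  gmul : gcar -> gcar -> gcar;
  gone : gcar;
  ginv : gcar -> gcar;
  gassoc : forall x y z, gmul x (gmul y z) = gmul (gmul x y) z;
  gid_l : forall x, gmul gone x = x;
  ginv_l : forall x, gmul (ginv x) x = gone
}.

Arguments gmul {g}.
Arguments gone {g}.
Arguments ginv {g}.

Definition gprod {G : group} (l : list G) : G := fold_right gmul gone l.

(* S is a finite generating set: listed without repetition, symmetric,
   not containing the identity, and generating G as a monoid
   (equivalently as a group, by symmetry). *)
Definition is_fin_sym_gen_set (G : group) (S : list G) : Prop :=
  NoDup S /\
  (forall a, In a S -> In (ginv a) S) /\
  ~ In (@gone G) S /\
  (forall x : G, exists l : list G, incl l S /\ gprod l = x).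

Definition is_word_length (G : group) (S : list G) (x : G) (n : nat) : Prop :=
  (exists l, incl l S /\ gprod l = x /\ length l = n) /\
  (forall l, incl l S -> gprod l = x -> (n <= length l)%nat).

(* word length |x|_S (meaningful when S generates G) *)
Definition word_length (G : group) (S : list G) (x : G) : nat :=
  epsilon (inhabits 0%nat) (fun n => is_word_length G S x n).

Definition word_dist (G : group) (S : list G) (x y : G) : nat :=
  word_length G S (gmul (ginv x) y).

Definition Av (G : group) (S : list G) (g : G) : R :=
  / INR (length S) *
  fold_right Rplus 0
    (map (fun a => INR (word_length G S (gmul (ginv a) (gmul g a)))) S).

Definition curvature (G : group) (S : list G) (g : G) : R :=
  (INR (word_length G S g) - Av G S g) / INR (word_length G S g).

Definition is_hom (G H : group) (phi : G -> H) : Prop :=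
  forall x y : G, phi (gmul x y) = gmul (phi x) (phi y).

(* Main.v *)
Require Import Defs.
From Stdlib Require Import Reals List Lia Lra Arith ClassicalEpsilon ProofIrrelevance Wf_nat.
Import ListNotations.


Local Open Scope nat_scope.
Section Grp.
Variable K : group.
Implicit Types x y z : K.

Lemma ginv_r x : gmul x (ginv x) = gone.
Proof.
  rewrite <- (gid_l K (gmul x (ginv x))).
  rewrite <- (ginv_l K (ginv x)) at 1.
  rewrite <- gassoc. rewrite (gassoc K (ginv x) x (ginv x)).
  rewrite ginv_l, gid_l. apply ginv_l.
Qed.

Lemma gid_r x : gmul x gone = x.
Proof. rewrite <- (ginv_l K x), gassoc, ginv_r. apply gid_l. Qed.

Lemma ginv_uniq x y : gmul y x = gone -> ginv x = y.
Proof.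
  intro H. rewrite <- (gid_l K (ginv x)), <- H, <- gassoc, ginv_r. apply gid_r.
Qed.

Lemma gprod_app (l1 l2 : list K) : gprod (l1 ++ l2) = gmul (gprod l1) (gprod l2).
Proof.
  induction l1; simpl. now rewrite gid_l. unfold gprod in *; simpl. rewrite IHl1. apply gassoc.
Qed.

Lemma conj_decomp (h s : K) : h = gmul s (gmul (gmul (ginv s) (gmul h s)) (ginv s)).
Proof.
  rewrite <- !gassoc, ginv_r, gid_r, gassoc, ginv_r, gid_l. reflexivity.
Qed.

Variable S : list K.
Hypothesis gen : forall x : K, exists l : list K, incl l S /\ gprod l = x.

Lemma wl_exists x : exists n, is_word_length K S x n.
Proof.
  destruct (dec_inh_nat_subset_has_unique_least_element
     (fun n => exists l, incl l S /\ gprod l = x /\ length l = n)) as [n [[H1 H2] _]].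
  - intro n; apply classic.
  - destruct (gen x) as [l [Hl Hx]]. exists (length l), l; auto.
  - exists n. split; auto. intros l Hl Hx. apply H2. exists l; auto.
Qed.

Lemma wl_spec x : is_word_length K S x (word_length K S x).
Proof.
  unfold word_length. apply epsilon_spec. apply wl_exists.
Qed.

Lemma wl_unique x n : is_word_length K S x n -> word_length K S x = n.
Proof.
  intros [[l [H1 [H2 H3]]] H4]. destruct (wl_spec x) as [[l' [H1' [H2' H3']]] H4'].
  specialize (H4 l' H1' H2'). specialize (H4' l H1 H2). lia.
Qed.

Lemma wl_le x l : incl l S -> gprod l = x -> word_length K S x <= length l.
Proof. intros; apply (proj2 (wl_spec x)); auto. Qed.

Lemma wl_word x : exists l, incl l S /\ gprod l = x /\ length l = word_length K S x.
Proof. apply (proj1 (wl_spec x)). Qed.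

Lemma wl_mul x y : word_length K S (gmul x y) <= word_length K S x + word_length K S y.
Proof.
  destruct (wl_word x) as [l1 [A1 [B1 C1]]]; destruct (wl_word y) as [l2 [A2 [B2 C2]]].
  rewrite <- C1, <- C2, <- length_app. apply wl_le.
  - intros a Ha; apply in_app_or in Ha; destruct Ha; auto.
  - rewrite gprod_app; congruence.
Qed.

Lemma wl_gen (s : K) : In s S -> word_length K S s <= 1.
Proof.
  intro H. apply (wl_le s [s]). intros a [<-|[]]; auto. unfold gprod; simpl. apply gid_r.
Qed.

Lemma wl_e : word_length K S gone = 0.
Proof. apply wl_unique. split. exists []; repeat split; auto. intros a []. intros; lia. Qed.

Lemma wl_zero x : word_length K S x = 0 -> x = gone.
Proof.
  intro H. destruct (wl_word x) as [l [A [B C]]]. rewrite H in C. destruct l; [|discriminate].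
  rewrite <- B; reflexivity.
Qed.

Lemma wl_conj (h s : K) : In s S -> In (ginv s) S ->
  word_length K S h <= word_length K S (gmul (ginv s) (gmul h s)) + 2.
Proof.
  intros H1 H2. rewrite (conj_decomp h s) at 1.
  eapply Nat.le_trans. apply wl_mul. pose proof (wl_gen s H1).
  eapply Nat.le_trans. apply Nat.add_le_mono_l. apply wl_mul.
  pose proof (wl_gen _ H2). lia.
Qed.

End Grp.

Local Open Scope nat_scope.

Section Constr.
Variable G : group.
Variable n : nat.

Definition St : Type := (G * list (nat * G))%type.

Fixpoint validr (r : list (nat * G)) : Prop :=
  match r with
  | [] => True
  | (i, g) :: r' => i < n /\ validr r' /\
      (g = gone -> match r' with (j, _) :: _ => i <> j | [] => True end)
  end.

Definition valid (s : St) : Prop := validr (snd s).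

Definition actG (g : G) (s : St) : St := (gmul g (fst s), snd s).

Definition actT (i : nat) (s : St) : St :=
  if lt_dec i n then
    match s with
    | (g0, (j, g1) :: r) =>
        if excluded_middle_informative (g0 = gone /\ i = j) then (g1, r)
        else (gone, (i, g0) :: (j, g1) :: r)
    | (g0, []) => (gone, [(i, g0)])
    end
  else s.

Inductive letter := LG (g : G) | LT (i : nat).

Definition act (l : letter) : St -> St :=
  match l with LG g => actG g | LT i => actT i end.

Definition actw (w : list letter) (s : St) : St := fold_right act s w.

Fixpoint nfwr (r : list (nat * G)) : list letter :=
  match r with [] => [] | (i, g) :: r' => LT i :: LG g :: nfwr r' end.

Definition nfw (s : St) : list letter := LG (fst s) :: nfwr (snd s).

Definition A (s : St) : St -> St := actw (nfw s).

Definition eSt : St := (gone, []).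

Definition invl (l : letter) : letter := match l with LG g => LG (ginv g) | LT i => LT i end.
Definition invw (w : list letter) : list letter := rev (map invl w).

Lemma valid_actG g s : valid s -> valid (actG g s).
Proof. destruct s; unfold valid, actG; simpl; auto. Qed.

Lemma valid_actT i s : valid s -> valid (actT i s).
Proof.
  destruct s as [g0 r]; unfold valid, actT; simpl.
  destruct (lt_dec i n) as [Hi|Hi]; auto.
  destruct r as [|[j g1] r]; simpl.
  - intros _; repeat split; auto.
  - intros [Hj [Hr Hc]].
    destruct (excluded_middle_informative (g0 = gone /\ i = j)) as [E|E]; simpl; auto.
    repeat split; auto.
Qed.

Lemma valid_act l s : valid s -> valid (act l s).
Proof. destruct l; simpl; [apply valid_actG|apply valid_actT]. Qed.

Lemma valid_actw w s : valid s -> valid (actw w s).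
Proof. induction w; simpl; auto. intro; apply valid_act; auto. Qed.

Lemma actG_comp g g' s : actG g (actG g' s) = actG (gmul g g') s.
Proof. destruct s; unfold actG; simpl. now rewrite gassoc. Qed.

Lemma actG_e s : actG gone s = s.
Proof. destruct s; unfold actG; simpl. now rewrite gid_l. Qed.

Lemma actT_inv i s : valid s -> actT i (actT i s) = s.
Proof.
  destruct s as [g0 r]; unfold valid, actT; simpl.
  destruct (lt_dec i n) as [Hi|Hi]; auto.
  destruct r as [|[j g1] r]; simpl.
  - intros _. destruct (excluded_middle_informative (gone = gone /\ i = i)) as [E|E]; auto.
    exfalso; auto.
  - intros [Hj [Hr Hc]].
    destruct (excluded_middle_informative (g0 = gone /\ i = j)) as [[E1 E2]|E].
    + subst g0 j. destruct r as [|[k g2] r]; simpl.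
      * reflexivity.
      * destruct (excluded_middle_informative (g1 = gone /\ i = k)) as [[E3 E4]|E3].
        -- exfalso. apply (Hc E3 E4).
        -- reflexivity.
    + destruct (excluded_middle_informative (gone = gone /\ i = i)) as [E'|E']; auto.
      exfalso; auto.
Qed.

Lemma act_inv l s : valid s -> act (invl l) (act l s) = s.
Proof.
  destruct l; simpl; intro H.
  - rewrite actG_comp, ginv_l. apply actG_e.
  - now apply actT_inv.
Qed.

Lemma actw_app w1 w2 s : actw (w1 ++ w2) s = actw w1 (actw w2 s).
Proof. unfold actw; apply fold_right_app. Qed.

Lemma actw_inv w s : valid s -> actw (invw w) (actw w s) = s.
Proof.
  induction w; simpl; auto. intro H. unfold invw; simpl. rewrite actw_app. simpl.
  rewrite act_inv. apply IHw; auto. apply valid_actw; auto.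
Qed.

Lemma C1 l s z : valid z -> act l (A s z) = A (act l s) z.
Proof.
  intro Hz. destruct s as [g0 r].
  destruct l as [g|i].
  - unfold A, nfw; simpl. unfold actG at 3. simpl. apply actG_comp.
  - simpl act at 2. unfold actT. destruct (lt_dec i n) as [Hi|Hi].
    + destruct r as [|[j g1] r].
      * unfold A, nfw; simpl. rewrite actG_e. reflexivity.
      * destruct (excluded_middle_informative (g0 = gone /\ i = j)) as [[E1 E2]|E].
        -- subst. unfold A, nfw; simpl. rewrite actG_e. rewrite actT_inv. reflexivity.
           apply valid_actG, valid_actw; auto.
        -- unfold A, nfw; simpl. rewrite actG_e. reflexivity.
    + simpl. unfold actT. destruct (lt_dec i n); [contradiction|reflexivity].
Qed.

Lemma Cw w s z : valid z -> actw w (A s z) = A (actw w s) z.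
Proof.
  intro Hz. induction w; simpl; auto. rewrite IHw. apply C1; auto.
Qed.

Lemma merge g0 rest zr : validr (rest ++ zr) -> A (g0, rest) (gone, zr) = (g0, rest ++ zr).
Proof.
  revert g0. induction rest as [|[i g1] r IH]; intros g0 Hv.
  - unfold A, nfw; simpl. unfold actG; simpl. now rewrite gid_r.
  - simpl in Hv. destruct Hv as [Hi [Hr Hc]].
    unfold A, nfw; simpl. specialize (IH g1 Hr). unfold A, nfw in IH; simpl in IH.
    rewrite IH. unfold actT. destruct (lt_dec i n) as [_|]; [|contradiction].
    destruct (r ++ zr) as [|[j g2] r'] eqn:E.
    + unfold actG; simpl. now rewrite gid_r.
    + destruct (excluded_middle_informative (g1 = gone /\ i = j)) as [[E1 E2]|_].
      * exfalso. apply (Hc E1 E2).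
      * unfold actG; simpl. now rewrite gid_r.
Qed.

Lemma expand s : valid s -> A s eSt = s.
Proof.
  destruct s as [g0 r]; unfold valid, eSt; simpl; intro H.
  rewrite merge; rewrite app_nil_r; auto.
Qed.

Lemma A_e z : A eSt z = z.
Proof. unfold A, nfw, eSt; simpl. apply actG_e. Qed.

End Constr.

Local Open Scope nat_scope.

Section Grp2.
Variable G : group.
Variable n : nat.

Definition V : Type := {s : St G | valid G n s}.

Lemma V_eq (x y : V) : proj1_sig x = proj1_sig y -> x = y.
Proof.
  destruct x as [x Hx], y as [y Hy]; simpl; intro E; subst. f_equal. apply proof_irrelevance.
Qed.

Definition mulV (x y : V) : V :=
  exist _ (A G n (proj1_sig x) (proj1_sig y)) (valid_actw G n _ _ (proj2_sig y)).

Definition oneV : V := exist _ (eSt G) I.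

Definition invV (x : V) : V :=
  exist _ (actw G n (invw G (nfw G (proj1_sig x))) (eSt G)) (valid_actw G n _ (eSt G) I).

Lemma mulV_assoc x y z : mulV x (mulV y z) = mulV (mulV x y) z.
Proof.
  apply V_eq; simpl. change (A G n (proj1_sig x) (proj1_sig y)) with (actw G n (nfw G (proj1_sig x)) (proj1_sig y)). rewrite <- Cw. reflexivity. apply (proj2_sig z).
Qed.

Lemma mulV_id x : mulV oneV x = x.
Proof. apply V_eq; simpl. apply A_e. Qed.

Lemma mulV_inv x : mulV (invV x) x = oneV.
Proof.
  apply V_eq; simpl. rewrite <- Cw by apply (proj2_sig x). rewrite A_e.
  rewrite <- (expand G n (proj1_sig x) (proj2_sig x)) at 2. unfold A.
  apply actw_inv. exact I.
Qed.

Definition H : group := Group V mulV oneV invV mulV_assoc mulV_id mulV_inv.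

End Grp2.

Local Open Scope nat_scope.

Section Gens.
Variable G : group.
Variable T : list G.
Variable n : nat.
Hypothesis HT : is_fin_sym_gen_set G T.

Let genT : forall x : G, exists l, incl l T /\ gprod l = x.
Proof. apply HT. Qed.

Definition wl (g : G) : nat := word_length G T g.

Definition emb (g : G) : H G n := exist _ (g, []) I.

Definition tee (i : nat) : H G n :=
  match lt_dec i n with
  | left Hi => exist (valid G n) (gone, [(i, gone)]) (conj Hi (conj I (fun _ => I)))
  | right _ => oneV G n
  end.

Definition Sgen : list (H G n) := map emb T ++ map tee (seq 0 n).

Definition Lr (r : list (nat * G)) : nat := fold_right (fun b acc => S (wl (snd b) + acc)) 0 r.
Definition Lst (s : St G) : nat := wl (fst s) + Lr (snd s).

Lemma mul_emb a (y : H G n) : proj1_sig (gmul (emb a) y) = actG G a (proj1_sig y).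
Proof. reflexivity. Qed.

Lemma mul_tee i (y : H G n) : i < n -> proj1_sig (gmul (tee i) y) = actT G n i (proj1_sig y).
Proof.
  intro Hi. unfold tee. destruct (lt_dec i n); [|contradiction]. simpl.
  unfold A, nfw; simpl. rewrite !actG_e. reflexivity.
Qed.

Lemma wl_e' : wl gone = 0.
Proof. apply wl_e; apply genT. Qed.

Lemma L_step s (y : H G n) : In s Sgen -> Lst (proj1_sig (gmul s y)) <= S (Lst (proj1_sig y)).
Proof.
  intro Hs. apply in_app_or in Hs. destruct Hs as [Hs|Hs]; apply in_map_iff in Hs; destruct Hs as [x [<- Hx]].
  - rewrite mul_emb. destruct (proj1_sig y) as [y0 r]. unfold Lst, actG; simpl.
    pose proof (wl_mul G T genT x y0). pose proof (wl_gen G T genT x Hx). unfold wl. lia.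
  - apply in_seq in Hx. rewrite mul_tee by lia. destruct y as [[y0 r] Hy]; simpl.
    unfold actT. destruct (lt_dec x n) as [_|]; [|lia].
    destruct r as [|[j g1] r].
    + unfold Lst; simpl. rewrite wl_e'. lia.
    + destruct (excluded_middle_informative (y0 = gone /\ x = j)) as [[E1 E2]|E].
      * subst. unfold Lst; simpl. rewrite wl_e'. lia.
      * unfold Lst; simpl. rewrite wl_e'. lia.
Qed.

Lemma L_lower (l : list (H G n)) : incl l Sgen -> Lst (proj1_sig (gprod l)) <= length l.
Proof.
  induction l as [|s l IH]; intro Hl.
  - simpl. unfold Lst; simpl. rewrite wl_e'. lia.
  - change (gprod (s :: l)) with (gmul s (gprod l)).
    eapply Nat.le_trans. apply L_step. apply Hl; left; auto.
    simpl. apply le_n_S. apply IH. intros a Ha; apply Hl; right; auto.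
Qed.

Lemma gprod_emb (w : list G) : proj1_sig (gprod (map emb w)) = (gprod w, []).
Proof.
  induction w as [|a w IH]; simpl. reflexivity.
  transitivity (actG G a (proj1_sig (gprod (map emb w)))). reflexivity.
  rewrite IH. reflexivity.
Qed.

Lemma upper rest : validr G n rest -> forall g0, exists l, incl l Sgen /\
   proj1_sig (gprod l) = (g0, rest) /\ length l = Lst (g0, rest).
Proof.
  induction rest as [|[i g1] r IH]; intros Hv g0.
  - destruct (wl_word G T genT g0) as [w [Hw1 [Hw2 Hw3]]].
    exists (map emb w). repeat split.
    + intros a Ha. apply in_map_iff in Ha. destruct Ha as [x [<- Hx]]. apply in_or_app; left.
      apply in_map; auto.
    + rewrite gprod_emb, Hw2. reflexivity.
    + rewrite length_map, Hw3. unfold Lst; simpl. unfold wl; lia.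
  - simpl in Hv. destruct Hv as [Hi [Hr Hc]].
    destruct (IH Hr g1) as [l1 [A1 [B1 C1]]].
    destruct (wl_word G T genT g0) as [w [Hw1 [Hw2 Hw3]]].
    exists (map emb w ++ tee i :: l1). repeat split.
    + intros a Ha. apply in_app_or in Ha. destruct Ha as [Ha|[<-|Ha]]; auto.
      * apply in_map_iff in Ha. destruct Ha as [x [<- Hx]]. apply in_or_app; left. apply in_map; auto.
      * apply in_or_app; right. apply in_map. apply in_seq. lia.
    + rewrite gprod_app. change (gprod (tee i :: l1)) with (gmul (tee i) (gprod l1)).
      change (proj1_sig (gmul (gprod (map emb w)) (gmul (tee i) (gprod l1))))
        with (A G n (proj1_sig (gprod (map emb w))) (proj1_sig (gmul (tee i) (gprod l1)))).
      rewrite gprod_emb, mul_tee, B1, Hw2 by auto.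
      unfold actT. destruct (lt_dec i n) as [_|]; [|contradiction].
      destruct r as [|[j g2] r].
      * unfold A, nfw; simpl. unfold actG; simpl. now rewrite gid_r.
      * destruct (excluded_middle_informative (g1 = gone /\ i = j)) as [[E1 E2]|E].
        -- exfalso. apply (Hc E1 E2).
        -- unfold A, nfw; simpl. unfold actG; simpl. now rewrite gid_r.
    + rewrite length_app, length_map. simpl. unfold Lst in *; simpl in *. unfold wl in *. lia.
Qed.

Lemma genH : forall x : H G n, exists l, incl l Sgen /\ gprod l = x.
Proof.
  intros [[g0 r] Hx]. destruct (upper r Hx g0) as [l [A1 [B1 _]]].
  exists l. split; auto. apply V_eq. rewrite B1. reflexivity.
Qed.

Lemma wlH x : word_length (H G n) Sgen x = Lst (proj1_sig x).
Proof.
  apply wl_unique. apply genH. split.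
  - destruct x as [[g0 r] Hx]. destruct (upper r Hx g0) as [l [A1 [B1 C1]]].
    exists l. repeat split; auto. apply V_eq. rewrite B1. reflexivity.
  - intros l Hl Hx. subst x. apply L_lower; auto.
Qed.

End Gens.

Local Open Scope nat_scope.

Lemma sum_lb1 {X} (l : list X) (f : X -> nat) c k :
  (forall x, In x l -> c <= f x + k) -> c * length l <= list_sum (map f l) + k * length l.
Proof.
  induction l as [|a l IH]; intro Hf; simpl. lia.
  pose proof (Hf a (or_introl eq_refl)). assert (IH' := IH (fun x Hx => Hf x (or_intror Hx))). nia.
Qed.

Lemma sum_lb2 (l : list nat) (f : nat -> nat) d p q :
  (forall i, In i l -> d <= f i + 4) -> (forall i, In i l -> i <> p -> i <> q -> d <= f i) ->
  d * length l <= list_sum (map f l) + 4 * count_occ Nat.eq_dec l p + 4 * count_occ Nat.eq_dec l q.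
Proof.
  induction l as [|a l IH]; intros H1 H2; simpl. lia.
  assert (IH' := IH (fun x Hx => H1 x (or_intror Hx)) (fun x Hx => H2 x (or_intror Hx))).
  pose proof (H1 a (or_introl eq_refl)). pose proof (H2 a (or_introl eq_refl)).
  destruct (Nat.eq_dec a p); destruct (Nat.eq_dec a q); try lia.

Qed.

Lemma sum_INR {X} (l : list X) (f : X -> nat) :
  fold_right Rplus 0%R (map (fun a => INR (f a)) l) = INR (list_sum (map f l)).
Proof.
  induction l; simpl. reflexivity. rewrite IHl, plus_INR. reflexivity.
Qed.

Section Fin.
Variable G : group.
Variable T : list G.
Variable n : nat.
Hypothesis HT : is_fin_sym_gen_set G T.
Hypothesis Hn : n = length T + 5.

Let genT : forall x : G, exists l, incl l T /\ gprod l = x.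
Proof. apply HT. Qed.

Notation HH := (H G n).
Notation SG := (Sgen G T n).

Lemma mul_proj (x y : HH) : proj1_sig (gmul x y) = A G n (proj1_sig x) (proj1_sig y).
Proof. reflexivity. Qed.

Lemma ginv_emb a : ginv (emb G n a) = emb G n (ginv a).
Proof.
  apply ginv_uniq. apply V_eq. rewrite mul_emb. simpl. unfold actG; simpl. now rewrite ginv_l.
Qed.

Lemma tee_proj i : i < n -> proj1_sig (tee G n i) = (gone, [(i, gone)]).
Proof. intro Hi. unfold tee. destruct (lt_dec i n); [reflexivity|contradiction]. Qed.

Lemma ginv_tee i : i < n -> ginv (tee G n i) = tee G n i.
Proof.
  intro Hi. apply ginv_uniq. apply V_eq. rewrite mul_tee, tee_proj by auto.
  unfold actT. destruct (lt_dec i n); [|contradiction].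
  destruct (excluded_middle_informative (gone = gone /\ i = i)) as [_|E]. reflexivity.
  exfalso; auto.
Qed.

Lemma emb_inj a b : emb G n a = emb G n b -> a = b.
Proof. intro E. apply (f_equal (fun x => fst (proj1_sig x))) in E. exact E. Qed.

Lemma SG_fsg : is_fin_sym_gen_set HH SG.
Proof.
  destruct HT as [ND [Sym [NE Gen]]].
  split; [|split; [|split]].
  - apply NoDup_app.
    + apply NoDup_map_NoDup_ForallPairs; auto. intros a b _ _. apply emb_inj.
    + apply NoDup_map_NoDup_ForallPairs. 2: apply seq_NoDup.
      intros a b Ha Hb E. apply in_seq in Ha, Hb.
      apply (f_equal (@proj1_sig _ _)) in E. rewrite !tee_proj in E by lia.
      injection E; auto.
    + intros a Ha Hb. apply in_map_iff in Ha, Hb. destruct Ha as [x [<- _]]. destruct Hb as [i [E Hi]].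
      apply in_seq in Hi. apply (f_equal (@proj1_sig _ _)) in E. rewrite tee_proj in E by lia.
      discriminate.
  - intros a Ha. apply in_app_or in Ha. destruct Ha as [Ha|Ha]; apply in_map_iff in Ha; destruct Ha as [x [<- Hx]].
    + rewrite ginv_emb. apply in_or_app; left; apply in_map; auto.
    + rewrite ginv_tee. apply in_or_app; right; apply in_map; auto. apply in_seq in Hx; lia.
  - intro Ha. apply in_app_or in Ha. destruct Ha as [Ha|Ha]; apply in_map_iff in Ha; destruct Ha as [x [E Hx]].
    + apply (f_equal (fun x => fst (proj1_sig x))) in E. simpl in E. subst. auto.
    + apply in_seq in Hx. apply (f_equal (@proj1_sig _ _)) in E. rewrite tee_proj in E by lia.
      discriminate.
  - apply genH; auto.
Qed.

Lemma validr_snoc r i : validr G n r -> i < n -> i <> fst (last r (n, gone)) ->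
  validr G n (r ++ [(i, gone)]).
Proof.
  induction r as [|[j g] r IH]; intros Hv Hi Hl; simpl.
  - repeat split; auto.
  - simpl in Hv. destruct Hv as [Hj [Hr Hc]]. repeat split; auto.
    + apply IH; auto. destruct r; simpl in *; auto. lia.
    + intro Hg. specialize (Hc Hg). destruct r as [|[k g2] r]; simpl in *; auto.
Qed.

Lemma Lr_app r1 r2 : Lr G T (r1 ++ r2) = Lr G T r1 + Lr G T r2.
Proof. induction r1; simpl; auto. rewrite IHr1. lia. Qed.

Lemma curv_main (h : HH) : h <> gone ->
  length SG * word_length HH SG h < list_sum (map (fun s => word_length HH SG (gmul (ginv s) (gmul h s))) SG).
Proof.
  intro Hne. set (f := fun s => word_length HH SG (gmul (ginv s) (gmul h s))).
  set (c := word_length HH SG h).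
  assert (Hc : forall s, In s SG -> c <= f s + 2).
  { intros s Hs. apply wl_conj. apply (SG_fsg). auto. apply SG_fsg; auto. }
  destruct h as [[g0 rest] Hv] eqn:Eh.
  assert (Hc1 : 1 <= c).
  { unfold c. rewrite wlH by auto. simpl. unfold Lst, wl; simpl.
    destruct rest as [|b r]; simpl. 2: lia.
    destruct (word_length G T g0) eqn:E. 2: lia.
    exfalso. apply Hne. apply V_eq. simpl. apply wl_zero in E; auto. subst. reflexivity. }
  set (p := match rest with (j, _) :: _ => j | [] => n end).
  set (q := fst (last rest (n, gone))).
  assert (Hgood : forall i, i < n -> i <> p -> i <> q -> c + 2 <= f (tee G n i)).
  { intros i Hi Hp Hq. unfold f. rewrite ginv_tee by auto. rewrite wlH by auto.
    rewrite mul_tee by auto.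
    rewrite mul_proj, tee_proj by auto. simpl proj1_sig. rewrite merge by (apply validr_snoc; auto).
    unfold actT. destruct (lt_dec i n) as [_|]; [|contradiction].
    destruct (rest ++ [(i, gone)]) as [|[j g1] r'] eqn:E.
    - destruct rest; discriminate.
    - destruct (excluded_middle_informative (g0 = gone /\ i = j)) as [[E1 E2]|E3].
      + exfalso. subst. destruct rest as [|[k g2] r]; simpl in E.
        * apply Hne. apply V_eq. reflexivity.
        * injection E; intros; subst. apply Hp. reflexivity.
      + unfold c. rewrite wlH by auto. unfold Lst. simpl. assert (EL := f_equal (Lr G T) E). rewrite Lr_app in EL. simpl in EL. unfold wl in *. rewrite wl_e in * by auto. lia. }
  unfold Sgen. rewrite map_app, list_sum_app, length_app, !length_map, length_seq.
  pose proof (sum_lb1 T (fun a => f (emb G n a)) c 2) as S1.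
  assert (S1' := S1 (fun x Hx => Hc _ (in_or_app _ _ _ (or_introl (in_map _ _ _ Hx))))).
  pose proof (sum_lb2 (seq 0 n) (fun i => f (tee G n i)) (c + 2) p q) as S2.
  rewrite map_map in *. rewrite length_seq in S2.
  assert (S2' : (c + 2) * n <= list_sum (map (fun i => f (tee G n i)) (seq 0 n)) + 4 * 1 + 4 * 1).
  { eapply Nat.le_trans. apply S2.
    - intros i Hi. pose proof (Hc (tee G n i) (in_or_app _ _ _ (or_intror (in_map _ _ _ Hi)))). lia.
    - intros i Hi. apply in_seq in Hi. apply Hgood; lia.
    - pose proof (proj1 (NoDup_count_occ Nat.eq_dec (seq 0 n)) (seq_NoDup n 0)) as Hcnt.
      pose proof (Hcnt p). pose proof (Hcnt q). lia. }
  rewrite (map_map (tee G n) f). nia.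
Qed.

Lemma curv_neg (h : HH) : h <> gone -> (curvature HH SG h < 0)%R.
Proof.
  intro Hne. pose proof (curv_main h Hne) as M.
  set (c := word_length HH SG h) in *.
  assert (Hc : c <> 0).
  { intro E. apply Hne. apply (wl_zero HH SG (proj2 (proj2 (proj2 SG_fsg)))). exact E. }
  assert (HN : 0 < length SG).
  { unfold Sgen. rewrite length_app, !length_map, length_seq. lia. }
  unfold curvature, Av. fold c.
  rewrite (sum_INR SG (fun a => word_length HH SG (gmul (ginv a) (gmul h a)))).
  set (Sm := list_sum _) in *.
  apply lt_INR in M. rewrite mult_INR in M.
  apply lt_INR in HN. simpl in HN.
  assert (Hc' : (0 < INR c)%R) by (apply lt_0_INR; lia).
  apply Rdiv_neg_pos; auto.
  assert (INR c < / INR (length SG) * INR Sm)%R.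
  { replace (INR c) with (/ INR (length SG) * (INR (length SG) * INR c))%R.
    apply Rmult_lt_compat_l. apply Rinv_0_lt_compat; auto. auto.
    field. apply Rgt_not_eq; auto. }
  lra.
Qed.

End Fin.

Close Scope nat_scope.
Open Scope R_scope.

Theorem mainTheorem12 (G : group) (T : list G) :
  is_fin_sym_gen_set G T ->
  exists (H : group) (S : list H) (phi : G -> H),
    is_fin_sym_gen_set H S /\
    is_hom G H phi /\
    (forall x y : G, word_dist H S (phi x) (phi y) = word_dist G T x y) /\
    (forall g : G, g <> gone -> curvature H S (phi g) < 0) /\
    (forall h : H, h <> gone -> curvature H S h < 0).
Proof.
  intro HT. set (n := (length T + 5)%nat).
  assert (Hn : n = (length T + 5)%nat) by reflexivity.
  exists (H G n), (Sgen G T n), (emb G n).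
  split; [|split; [|split; [|split]]].
  - apply SG_fsg; auto.
  - intros x y. apply V_eq. reflexivity.
  - intros x y. unfold word_dist. rewrite ginv_emb.
    assert (E : gmul (emb G n (ginv x)) (emb G n y) = emb G n (gmul (ginv x) y)) by (apply V_eq; reflexivity).
    rewrite E, wlH by apply HT. unfold Lst; simpl. unfold wl. lia.
  - intros g Hg. apply curv_neg; auto. intro E. apply Hg. apply (emb_inj G n). exact E.
  - intros h Hh. apply curv_neg; auto.
Qed.
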